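(* Let $\mathbf A\in\mathbb{R}^{N\times N}$, $\mathbf B,\mathbf C\in\mathbb{R}^{N\times n_s}$, fix a sign $\pm$, and let $\mathbf U\in\mathbb{R}^{N\times n}$ be a POD basis with columns $\mathbf u_1,\dots,\mathbf u_n$. Set $\hat{\mathbf A}=\mathbf U^\intercal\mathbf A\mathbf U\in\mathbb{R}^{n\times n}$, $\hat{\mathbf B}=\mathbf U^\intercal\mathbf B$, $\hat{\mathbf C}=\mathbf U^\intercal\mathbf C\in\mathbb{R}^{n\times n_s}$, and suppose $\hat{\mathbf D}\in\mathbb{R}^{n\times n}$ is the unique solution of \[\operatorname*{argmin}_{\mathbf D\in\mathbb{R}^{n\times n}}\|\hat{\mathbf C}-\hat{\mathbf A}\mathbf D\hat{\mathbf B}\|^2\quad\text{subject to}\quad\mathbf D^\intercal=\pm\mathbf D.\] Let $n'<n$, let $\mathbf U'\in\mathbb{R}^{N\times n'}$ consist of the first $n'$ columns of $\mathbf U$ (i.e. the $n-n'$ highest-frequency basis vectors removed), and set $\hat{\mathbf A}'=\mathbf U'^\intercal\mathbf A\mathbf U'$, $\hat{\mathbf B}'=\mathbf U'^\intercal\mathbf B$, $\hat{\mathbf C}'=\mathbf U'^\intercal\mathbf C$, and let $\hat{\mathbf D}'$ be the top-left $n'\times n'$ submatrix of $\hat{\mathbf D}$. If $\hat{\mathbf A}$ and $\hat{\mathbf B}\hat{\mathbf B}^\intercal$ are both diagonal, then the unique solution of \[\operatorname*{argmin}_{\mathbf D\in\mathbb{R}^{n'\times n'}}\|\hat{\mathbf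 C}'-\hat{\mathbf A}'\mathbf D\hat{\mathbf B}'\|^2\quad\text{subject to}\quad\mathbf D^\intercal=\pm\mathbf D\] is given by the truncation $\hat{\mathbf D}'$.
   Context: A POD basis is a matrix $\mathbf U\in\mathbb{R}^{N\times n}$ whose columns are the first $n$ left singular vectors (ordered by decreasing singular value) of a snapshot data matrix; in particular $\mathbf U^\intercal\mathbf U=\mathbf I$. $\|\cdot\|$ is the Frobenius norm. *)

(* Defs.v *)
From mathcomp Require Import all_boot all_order all_algebra.
From mathcomp Require Import reals.
Set Implicit Arguments. Unset Strict Implicit. Unset Printing Implicit Defensive.
Import Order.TTheory GRing.Theory Num.Theory.
Local Open Scope ring_scope.

Definition frob2 (R : realType) m n (M : 'M[R]_(m, n)) : R :=
  \sum_(i < m) \sum_(j < n) M i j ^+ 2.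

(* The fixed sign: pm = false means "+", pm = true means "-". *)
Definition sgn (R : realType) (pm : bool) : R := (-1) ^+ pm.

Definition first_cols (R : realType) N n k (hk : (k <= n)%N) (U : 'M[R]_(N, n))
  : 'M[R]_(N, k) := \matrix_(i < N, j < k) U i (widen_ord hk j).

Definition topleft (R : realType) n k (hk : (k <= n)%N) (D : 'M[R]_n) : 'M[R]_k :=
  \matrix_(i < k, j < k) D (widen_ord hk i) (widen_ord hk j).

(* U is a POD basis: its columns are the first n left singular vectors,
   ordered by decreasing singular value, of some snapshot matrix X, i.e.
   X = W S V^T is an SVD (W, V orthogonal, S rectangular diagonal with
   nonnegative non-increasing diagonal) and U consists of the first n
   columns of W. *)
Definition POD_basis (R : realType) N n (U : 'M[R]_(N, n)) : Prop :=
  exists (m : nat) (X : 'M[R]_(N, m)) (W : 'M[R]_N) (S : 'M[R]_(N, m))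
         (V : 'M[R]_m) (hn : (n <= N)%N),
    [/\ W^T *m W = 1%:M, V^T *m V = 1%:M, X = W *m S *m V^T & is_diag_mx S] /\
    [/\
        (forall (i : 'I_N) (j : 'I_m), (i : nat) = j -> 0 <= S i j),
        (forall (i i' : 'I_N) (j j' : 'I_m), (i : nat) = j -> (i' : nat) = j' ->
           (i <= i')%N -> S i' j' <= S i j)
      & U = first_cols hn W].

Definition obj (R : realType) n ns (Ah : 'M[R]_n) (Bh Ch : 'M[R]_(n, ns))
  (D : 'M[R]_n) : R := frob2 (Ch - Ah *m D *m Bh).

Definition is_argmin (R : realType) (pm : bool) n ns (Ah : 'M[R]_n)
  (Bh Ch : 'M[R]_(n, ns)) (D : 'M[R]_n) : Prop :=
  D^T = sgn R pm *: D /\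
  forall D' : 'M[R]_n, D'^T = sgn R pm *: D' -> obj Ah Bh Ch D <= obj Ah Bh Ch D'.

Definition is_unique_argmin (R : realType) (pm : bool) n ns (Ah : 'M[R]_n)
  (Bh Ch : 'M[R]_(n, ns)) (D : 'M[R]_n) : Prop :=
  is_argmin pm Ah Bh Ch D /\
  forall D' : 'M[R]_n, is_argmin pm Ah Bh Ch D' -> D' = D.

(* Main.v *)
Require Import Defs.
From mathcomp Require Import all_boot all_order all_algebra.
From mathcomp Require Import reals.
From mathcomp Require Import ring lra.
Import Order.TTheory GRing.Theory Num.Theory.
Set Implicit Arguments. Unset Strict Implicit.
Local Open Scope ring_scope.

Section Sep.
Variables (R : realType) (n ns : nat) (Ah : 'M[R]_n) (Bh Ch : 'M[R]_(n, ns)).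

Definition phi (i j : 'I_n) (x : R) : R :=
  Ah i i ^+ 2 * (x ^+ 2 * (Bh *m Bh^T) j j) - 2 * Ah i i * (x * (Ch *m Bh^T) i j).

Lemma obj_sep (D : 'M[R]_n) : is_diag_mx Ah -> is_diag_mx (Bh *m Bh^T) ->
  obj Ah Bh Ch D = \sum_i \sum_k Ch i k ^+ 2 + \sum_i \sum_j phi i j (D i j).
Proof.
move=> /is_diag_mxP dA /is_diag_mxP dB.
rewrite /obj /frob2 -big_split /=; apply: eq_bigr => i _.
have E1 k : (Ah *m D *m Bh) i k = Ah i i * \sum_j D i j * Bh j k.
  rewrite mxE mulr_sumr; apply: eq_bigr => j _.
  rewrite mxE (bigD1 i) //= big1 ?addr0 ?mulrA // => l hl.
  by rewrite dA ?mul0r // eq_sym.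
have E2 k : (Ch - Ah *m D *m Bh) i k = Ch i k - Ah i i * \sum_j D i j * Bh j k.
  by rewrite -E1 !mxE.
under eq_bigr => k _ do rewrite E2.
set a := Ah i i.
have S1 : \sum_k Ch i k * (\sum_j D i j * Bh j k) = \sum_j D i j * (Ch *m Bh^T) i j.
  under eq_bigr => k _ do rewrite mulr_sumr.
  rewrite exchange_big /=; apply: eq_bigr => j _.
  rewrite mxE mulr_sumr; apply: eq_bigr => k _; rewrite mxE; ring.
have S2 : \sum_k (\sum_j D i j * Bh j k) ^+ 2 = \sum_j D i j ^+ 2 * (Bh *m Bh^T) j j.
  under eq_bigr => k _ do rewrite expr2 mulr_suml.
  rewrite exchange_big /=; apply: eq_bigr => j _.
  under eq_bigr => k _ do rewrite mulr_sumr.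
  rewrite exchange_big /= (bigD1 j) //= [X in _ + X]big1 ?addr0.
    rewrite mxE big_distrr /=; apply: eq_bigr => k _; rewrite mxE; ring.
  move=> l hl; transitivity (D i j * D i l * (Bh *m Bh^T) j l); last by rewrite dB ?mulr0 // eq_sym.
  rewrite mxE big_distrr /=; apply: eq_bigr => k _; rewrite mxE; ring.
have -> : \sum_k (Ch i k - a * \sum_j D i j * Bh j k) ^+ 2 =
  \sum_k Ch i k ^+ 2 - 2 * a * \sum_k Ch i k * (\sum_j D i j * Bh j k)
  + a ^+ 2 * \sum_k (\sum_j D i j * Bh j k) ^+ 2.
  rewrite !mulr_sumr -sumrB -big_split /=; apply: eq_bigr => k _; ring.
rewrite S1 S2 /phi -addrA; congr (_ + _).
rewrite !mulr_sumr -sumrN -big_split /=; apply: eq_bigr => j _; rewrite /a; ring.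
Qed.
End Sep.

Section Main.
Variables (R : realType) (n n' ns : nat) (h : (n' <= n)%N).
Local Notation w := (widen_ord h).

Lemma sum_split2 (f : 'I_n -> 'I_n -> R) :
  \sum_(i < n) \sum_(j < n) f i j = \sum_(i < n') \sum_(j < n') f (w i) (w j) +
    \sum_(i < n) \sum_(j < n) (if (i < n')%N && (j < n')%N then 0 else f i j).
Proof.
have -> : \sum_(i < n) \sum_(j < n) f i j = \sum_(i < n) \sum_(j < n)
   ((if (i < n')%N && (j < n')%N then f i j else 0) +
    (if (i < n')%N && (j < n')%N then 0 else f i j)).
  by apply: eq_bigr => i _; apply: eq_bigr => j _; case: ifP; rewrite ?addr0 ?add0r.
under eq_bigr do rewrite big_split; rewrite big_split /=; congr (_ + _).
symmetry; rewrite -(@big_ord_narrow R 0 +%R n' n (fun i => \sum_(j < n') f i (w j)) h) big_mkcond /=; apply: eq_bigr => i _.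
case: ifP => hi.
  rewrite -(@big_ord_narrow R 0 +%R n' n (fun j => f i j) h) big_mkcond; apply: eq_bigr => j _. done.
by rewrite big1 // => j _; rewrite hi.
Qed.

Definition ext (E : 'M[R]_n') (D : 'M[R]_n) : 'M[R]_n :=
  \matrix_(i, j) match (insub (i : nat) : option 'I_n'), (insub (j : nat) : option 'I_n') with
                 | Some i', Some j' => E i' j'
                 | _, _ => D i j end.

Lemma ext_in E D i j : ext E D (w i) (w j) = E i j.
Proof. by rewrite mxE /= !valK. Qed.

Lemma ext_out E D (i j : 'I_n) : ~~ ((i < n')%N && (j < n')%N) -> ext E D i j = D i j.
Proof.
rewrite mxE; case: (@insubP _ _ 'I_n' (i : nat)) => [i' hi _|hi]; case: (@insubP _ _ 'I_n' (j : nat)) => [j' hj _|hj] //.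
by rewrite hi hj.
Qed.

Lemma tl_ext E D : topleft h (ext E D) = E.
Proof. by apply/matrixP => i j; rewrite mxE ext_in. Qed.

Lemma tl_sym (s : R) D : D^T = s *: D -> (topleft h D)^T = s *: topleft h D.
Proof.
move/matrixP=> H; apply/matrixP => i j; rewrite !mxE.
by have := H (w i) (w j); rewrite !mxE.
Qed.

Lemma ext_sym (s : R) E D : E^T = s *: E -> D^T = s *: D -> (ext E D)^T = s *: ext E D.
Proof.
move/matrixP=> HE /matrixP HD; apply/matrixP => i j; rewrite !mxE.
case: (@insubP _ _ 'I_n' (i : nat)) => [i' hi _|hi];
  case: (@insubP _ _ 'I_n' (j : nat)) => [j' hj _|hj].
- by have := HE i' j'; rewrite !mxE.
- by have := HD i j; rewrite !mxE.
- by have := HD i j; rewrite !mxE.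
- by have := HD i j; rewrite !mxE.
Qed.
Variables (Ah : 'M[R]_n) (Bh Ch : 'M[R]_(n, ns)) (Ah' : 'M[R]_n') (Bh' Ch' : 'M[R]_(n', ns)).
Hypotheses (hA : forall i j, Ah' i j = Ah (w i) (w j))
  (hB : forall i k, Bh' i k = Bh (w i) k) (hC : forall i k, Ch' i k = Ch (w i) k)
  (dA : is_diag_mx Ah) (dB : is_diag_mx (Bh *m Bh^T)).

Lemma BB' i j : (Bh' *m Bh'^T) i j = (Bh *m Bh^T) (w i) (w j).
Proof. rewrite !mxE; apply: eq_bigr => k _; by rewrite !mxE !hB. Qed.
Lemma CB' i j : (Ch' *m Bh'^T) i j = (Ch *m Bh^T) (w i) (w j).
Proof. rewrite !mxE; apply: eq_bigr => k _; by rewrite !mxE hB hC. Qed.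

Lemma dA' : is_diag_mx Ah'.
Proof.
apply/is_diag_mxP => i j hij; rewrite hA; move/is_diag_mxP: dA; apply.
apply: contra hij => /eqP e; by rewrite -[i : nat]/(w i : nat) e.
Qed.
Lemma dB' : is_diag_mx (Bh' *m Bh'^T).
Proof.
apply/is_diag_mxP => i j hij; rewrite BB'; move/is_diag_mxP: dB; apply.
apply: contra hij => /eqP e; by rewrite -[i : nat]/(w i : nat) e.
Qed.

Lemma phi' i j x : phi Ah' Bh' Ch' i j x = phi Ah Bh Ch (w i) (w j) x.
Proof. by rewrite /phi hA BB' CB'. Qed.

Let F := obj Ah Bh Ch.
Let G := obj Ah' Bh' Ch'.

Lemma KI E D : F (ext E D) + G (topleft h D) = F D + G E.
Proof.
rewrite /F /G !obj_sep //; try exact: dA'; try exact: dB'.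
rewrite (sum_split2 (fun i j => phi Ah Bh Ch i j (ext E D i j))).
rewrite (sum_split2 (fun i j => phi Ah Bh Ch i j (D i j))).
have e1 : \sum_(i < n') \sum_(j < n') phi Ah Bh Ch (w i) (w j) (ext E D (w i) (w j))
   = \sum_(i < n') \sum_(j < n') phi Ah' Bh' Ch' i j (E i j).
  by apply: eq_bigr => i _; apply: eq_bigr => j _; rewrite ext_in phi'.
have e2 : \sum_(i < n) \sum_(j < n) (if (i < n')%N && (j < n')%N then 0
          else phi Ah Bh Ch i j (ext E D i j)) =
   \sum_(i < n) \sum_(j < n) (if (i < n')%N && (j < n')%N then 0
          else phi Ah Bh Ch i j (D i j)).
  apply: eq_bigr => i _; apply: eq_bigr => j _; case: ifP => // hP.
  by rewrite ext_out ?hP.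
have e3 : \sum_(i < n') \sum_(j < n') phi Ah' Bh' Ch' i j (topleft h D i j) =
   \sum_(i < n') \sum_(j < n') phi Ah Bh Ch (w i) (w j) (D (w i) (w j)).
  by apply: eq_bigr => i _; apply: eq_bigr => j _; rewrite phi' mxE.
rewrite e1 e2 e3; ring.
Qed.
Lemma main_lemma (pm : bool) (Dh : 'M[R]_n) :
  is_unique_argmin pm Ah Bh Ch Dh -> is_unique_argmin pm Ah' Bh' Ch' (topleft h Dh).
Proof.
move=> [[sD minD] uniqD].
have argG : is_argmin pm Ah' Bh' Ch' (topleft h Dh).
  split; first exact: tl_sym.
  move=> E sE; have := minD _ (ext_sym sE sD); have := KI E Dh.
  rewrite -/F -/G => k1 k2.
  rewrite -/G; lra.
split=> // E' [sE' minE'].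
have amx : is_argmin pm Ah Bh Ch (ext E' Dh).
  split; first exact: ext_sym.
  move=> D' sD'.
  have h1 := minD _ (ext_sym (tl_sym sD) sD').
  have h2 := KI (topleft h Dh) D'.
  have h3 := KI E' Dh.
  have h4 := minE' _ (tl_sym sD').
  rewrite -/F -/G in h1 h2 h3 h4 *; lra.
by rewrite -(uniqD _ amx) tl_ext.
Qed.
End Main.
Theorem proposition2 (R : realType) (N ns n n' : nat) (pm : bool)
  (A : 'M[R]_N) (B C : 'M[R]_(N, ns)) (U : 'M[R]_(N, n))
  (hn' : (n' < n)%N) (Dh : 'M[R]_n) :
  POD_basis U ->
  is_unique_argmin pm (U^T *m A *m U) (U^T *m B) (U^T *m C) Dh ->
  is_diag_mx (U^T *m A *m U) ->
  is_diag_mx ((U^T *m B) *m (U^T *m B)^T) ->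
  let U' := first_cols (ltnW hn') U in
  is_unique_argmin pm (U'^T *m A *m U') (U'^T *m B) (U'^T *m C)
    (topleft (ltnW hn') Dh).

Proof.
move=> _ Hu dA dB U'.
apply: (@main_lemma R n n' ns (ltnW hn') _ _ _ _ _ _ _ _ _ dA dB pm Dh Hu).
- move=> i j; rewrite !mxE; apply: eq_bigr => l _; rewrite !mxE; congr (_ * _).
  by apply: eq_bigr => m _; rewrite !mxE.
- by move=> i k; rewrite !mxE; apply: eq_bigr => l _; rewrite !mxE.
- by move=> i k; rewrite !mxE; apply: eq_bigr => l _; rewrite !mxE.
Qed.
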